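(* Consider $N$ sellers $i=1,\dots,N$ over a time horizon $[0,H]$, a reserve-utility function $\underline{R}:[0,H]\to\mathbb{R}$, and selection functions $f_i:\mathbb{R}^N\times\mathbb{R}\to\mathbb{R}$. Each seller $i$ has true-metric functions $e_i^T,e_i^C:[0,H]\to\mathbb{R}$ (under treatment/control) and estimated-score functions $\hat e_i^T,\hat e_i^C:[0,H]\to\mathbb{R}$. Suppose $\hat e_i^C(t)=\hat e_i^T(t)$ for all $i=1,\dots,N$ and $t\in[0,H]$. In the naive seller-side experiment without feedback loops (defined in the context), let each seller be independently assigned to the treatment group $\mathcal{T}$ with probability $p\in(0,1)$ and otherwise to the control group $\mathcal{C}$. Then the estimator $\widehat{GTE}$ is unbiased for $\mathrm{GTE}$, i.e. $\mathbb{E}[\widehat{GTE}]=\mathrm{GTE}$, where the expectation is over the random assignment.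
   Context: Setting without feedback loops: the ranking score of a seller equals its estimated score. Global treatment regime: for all $i$ and $t$, $r_i^{GT}(t)=\hat e_i^T(t)$, $I_i^{GT}(t)=\mathbb{I}\{f_i(r_1^{GT}(t),\dots,r_N^{GT}(t),\underline{R}(t))\ge 0\}$, $O_i^{GT}(t)=I_i^{GT}(t)e_i^T(t)$. Global control regime: the same with $\hat e_i^C$ and $e_i^C$ in place of $\hat e_i^T$ and $e_i^T$, giving $r_i^{GC},I_i^{GC},O_i^{GC}$. The global treatment effect is $\mathrm{GTE}=\frac1N\sum_{i=1}^N\int_0^H\big(O_i^{GT}(t)-O_i^{GC}(t)\big)dt$. Naive seller-side experiment: given a partition $\{1,\dots,N\}=\mathcal{T}\cup\mathcal{C}$ (disjoint), for $i\in\mathcal{T}$ set $E=T$ and for $i\in\mathcal{C}$ set $E=C$; then $r_i^E(t)=\hat e_i^E(t)$, $I_i^E(t)=\mathbb{I}\{f_i(\{r_j^T(t):j\in\mathcal{T}\}\cup\{r_j^C(t):j\in\mathcal{C}\},\underline{R}(t))\ge0\}$ (i.e. $f_i$ evaluated at the vector whose $j$-th entry is seller $j$'s own-group score), and $O_i^E(t)=I_i^E(t)e_i^E(t)$. The estimator is $\widehat{GTE}=\frac{1}{Np}\sum_{i\in\mathcal{T}}\int_0^H O_i^T(t)dt-\frac{1}{N(1-p)}\sum_{i\in\mathcal{C}}\int_0^H O_i^C(t)dt$. *)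

(* Defs.v *)
From HB Require Import structures.
From mathcomp Require Import all_boot all_order all_algebra.
From mathcomp Require Import all_classical all_reals all_analysis.
Set Implicit Arguments. Unset Strict Implicit. Unset Printing Implicit Defensive.
Import Order.TTheory GRing.Theory Num.Theory.
Local Open Scope classical_set_scope.
Local Open Scope ring_scope.

Section Market.
Variable R : realType.
Variable N : nat.

Definition horizon_int (H : R) (g : R -> R) : R :=
  Rintegral (@lebesgue_measure R) `[0, H] g.

Definition sel_ind (f : 'I_N -> 'rV[R]_N -> R -> R) (Rlow : R -> R)
    (r : 'I_N -> R -> R) (i : 'I_N) (t : R) : R :=
  if 0 <= f i (\row_j r j t) (Rlow t) then 1 else 0.

(* global treatment / control outcomes: ranking score = estimated score *)
Definition O_global (f : 'I_N -> 'rV[R]_N -> R -> R) (Rlow : R -> R)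
    (ehat e : 'I_N -> R -> R) (i : 'I_N) (t : R) : R :=
  sel_ind f Rlow ehat i t * e i t.

Definition GTE (H : R) (f : 'I_N -> 'rV[R]_N -> R -> R) (Rlow : R -> R)
    (eT eC ehT ehC : 'I_N -> R -> R) : R :=
  N%:R^-1 * \sum_(i < N)
    horizon_int H (fun t => O_global f Rlow ehT eT i t - O_global f Rlow ehC eC i t).

Definition grp (Tset : {set 'I_N}) (xT xC : 'I_N -> R -> R) : 'I_N -> R -> R :=
  fun j t => if j \in Tset then xT j t else xC j t.

Definition O_naive (Tset : {set 'I_N}) (f : 'I_N -> 'rV[R]_N -> R -> R)
    (Rlow : R -> R) (eT eC ehT ehC : 'I_N -> R -> R) (i : 'I_N) (t : R) : R :=
  sel_ind f Rlow (grp Tset ehT ehC) i t * grp Tset eT eC i t.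

Definition GTE_hat (p H : R) (Tset : {set 'I_N}) (f : 'I_N -> 'rV[R]_N -> R -> R)
    (Rlow : R -> R) (eT eC ehT ehC : 'I_N -> R -> R) : R :=
  (N%:R * p)^-1 * \sum_(i in Tset) horizon_int H (O_naive Tset f Rlow eT eC ehT ehC i)
  - (N%:R * (1 - p))^-1 * \sum_(i in ~: Tset) horizon_int H (O_naive Tset f Rlow eT eC ehT ehC i).

(* probability of assignment Tset when each seller is independently
   treated with probability p *)
Definition assign_prob (p : R) (Tset : {set 'I_N}) : R :=
  p ^+ #|Tset| * (1 - p) ^+ (N - #|Tset|).

Definition expect_assign (p : R) (X : {set 'I_N} -> R) : R :=
  \sum_(Tset : {set 'I_N}) assign_prob p Tset * X Tset.

End Market.

(* Main.v *)
Require Import Defs.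
From HB Require Import structures.
From mathcomp Require Import all_boot all_order all_algebra.
From mathcomp Require Import all_classical all_reals all_analysis.
From mathcomp Require Import ring lra.
Import Order.TTheory GRing.Theory Num.Theory.
Local Open Scope classical_set_scope.
Local Open Scope ring_scope.

Lemma sum_sets (R : comRingType) n (w : 'I_n -> bool -> R) :
  \sum_(A : {set 'I_n}) \prod_j w j (j \in A) = \prod_j (w j true + w j false).
Proof.
have -> : \prod_j (w j true + w j false) = \prod_j \sum_(b : bool) w j b.
  apply: eq_bigr => j _; rewrite big_bool.
  done.
rewrite bigA_distr_bigA /=.
rewrite (reindex (fun f : {ffun 'I_n -> bool} => FinSet f)) /=.
  apply: eq_bigr => f _; apply: eq_bigr => j _.
  by rewrite unlock /= /in_mem /= /pred_of_set /=.
exists (fun A : {set 'I_n} => finfun_of_set A) => [f _|A _] //.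
by case: A.
Qed.

Lemma assign_prod (R : realType) n (p : R) (T : {set 'I_n}) :
  assign_prob p T = \prod_j (if j \in T then p else 1 - p).
Proof.
rewrite /assign_prob (bigID (mem T)) /=.
rewrite (eq_bigr (fun=> p)); last by move=> j ->.
rewrite [X in _ = _ * X](eq_bigr (fun=> 1 - p)); last by move=> j /negbTE ->.
rewrite !prodr_const; congr (_ * _ ^+ _).
have hc := cardC (mem T); rewrite card_ord in hc.
transitivity #|[predC mem T]|; last by apply: eq_card => j; rewrite !inE.
apply/eqP; rewrite -(eqn_add2l #|T|) hc subnKC //.
by have := max_card (mem T); rewrite card_ord.
Qed.

Lemma marg (R : realType) n (p : R) (i : 'I_n) (b : bool) :
  \sum_(T : {set 'I_n}) assign_prob p T * (if (i \in T) == b then 1 else 0)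
  = if b then p else 1 - p.
Proof.
set w := fun (j : 'I_n) (c : bool) => if c then p else 1 - p.
set F := fun (j : 'I_n) (c : bool) =>
  w j c * (if j == i then (if c == b then 1 else 0) else 1).
transitivity (\sum_(T : {set 'I_n}) \prod_j F j (j \in T)).
  apply: eq_bigr => T _; rewrite assign_prod /F big_split /=.
  congr (_ * _); rewrite (bigD1 i) //= eqxx big1 ?mulr1 // => j /negbTE -> //.
rewrite sum_sets (bigD1 i) //= big1 ?mulr1.
  rewrite /F /w eqxx; clear F w; by case: b => /=; rewrite ?mulr1 ?mulr0 ?addr0 ?add0r.
move=> j /negbTE ji; rewrite /F /w ji !mulr1; lra.
Qed.

Lemma sel_ind_ext (R : realType) n (f : 'I_n -> 'rV[R]_n -> R -> R) Rlow
  (r r' : 'I_n -> R -> R) i t :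
  (forall j, r j t = r' j t) -> sel_ind f Rlow r i t = sel_ind f Rlow r' i t.
Proof.
move=> h; rewrite /sel_ind.
have -> : \row_j r j t = \row_j r' j t by apply/rowP => j; rewrite !mxE.
done.
Qed.

Theorem proposition1 (R : realType) (N : nat) (H p : R) (Rlow : R -> R)
    (f : 'I_N -> 'rV[R]_N -> R -> R) (eT eC ehT ehC : 'I_N -> R -> R) :
  (0 < N)%N -> 0 < p < 1 ->
  (forall (i : 'I_N) (t : R), 0 <= t <= H -> ehC i t = ehT i t) ->
  (forall i : 'I_N, (@lebesgue_measure R).-integrable `[0, H]
       (fun t => (O_global f Rlow ehT eT i t)%:E)) ->
  (forall i : 'I_N, (@lebesgue_measure R).-integrable `[0, H]
       (fun t => (O_global f Rlow ehC eC i t)%:E)) ->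
  expect_assign p (fun Tset => GTE_hat p H Tset f Rlow eT eC ehT ehC)
  = GTE H f Rlow eT eC ehT ehC.
Proof.
move=> N0 /andP[p0 p1] hC iT iC.
set a := fun i => horizon_int H (O_global f Rlow ehT eT i).
set b := fun i => horizon_int H (O_global f Rlow ehC eC i).
have hN : forall T i, horizon_int H (O_naive T f Rlow eT eC ehT ehC i)
    = if i \in T then a i else b i.
  move=> T i; rewrite /a /b /horizon_int.
  case: ifP => iT'; apply: eq_Rintegral => t; rewrite inE /= in_itv /= => ht;
    rewrite /O_naive /O_global /grp iT'.
    congr (_ * _); apply: sel_ind_ext => j; case: ifP => // _; exact: hC.
  congr (_ * _); rewrite [RHS](@sel_ind_ext _ _ _ _ _ ehT); last by move=> j; exact: hC.
  apply: sel_ind_ext => j; case: ifP => // _; exact: hC.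
have hG : GTE H f Rlow eT eC ehT ehC = N%:R^-1 * \sum_i (a i - b i).
  rewrite /GTE; congr (_ * _); apply: eq_bigr => i _.
  rewrite /horizon_int RintegralB //; [exact: iT|exact: iC].
rewrite hG /expect_assign /GTE_hat.
set c1 := (N%:R * p)^-1; set c2 := (N%:R * (1 - p))^-1.
transitivity (\sum_(T : {set 'I_N}) \sum_i (assign_prob p T *
   (c1 * (if i \in T then a i else 0) - c2 * (if i \in T then 0 else b i)))).
  apply: eq_bigr => T _.
  rewrite big_mkcond [in X in _ - _ * X]big_mkcond /= !mulr_sumr -sumrB mulr_sumr.
  apply: eq_bigr => i _; rewrite hN inE; case: (i \in T) => /=; ring.
rewrite exchange_big /= mulr_sumr; apply: eq_bigr => i _.
transitivity (c1 * a i * (\sum_(T : {set 'I_N}) assign_prob p T * (if (i \in T) == true then 1 else 0))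
  - c2 * b i * (\sum_(T : {set 'I_N}) assign_prob p T * (if (i \in T) == false then 1 else 0))).
  rewrite !mulr_sumr -sumrB; apply: eq_bigr => T _; case: (i \in T) => /=; ring.
rewrite !marg /c1 /c2.
have hN0 : N%:R != 0 :> R by rewrite pnatr_eq0 -lt0n.
have hp : p != 0 by rewrite gt_eqF.
have hq : 1 - p != 0 by rewrite subr_eq0 eq_sym lt_eqF.
field; rewrite hN0 hp hq //.
Qed.
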